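(* Let $(Y,\lambda)\in\{-1,1\}\times\{-1,1\}^m$ follow the Ising model $$P(Y,\lambda)=\frac1Z\exp\Big(\theta_Y Y+\sum_i\theta_i\lambda_iY+\sum_{(i,j)\in E_\lambda}\theta_{ij}\lambda_i\lambda_j\Big),$$ with all canonical parameters positive. Here $E_\lambda$ is a set of $|E_\lambda|=d$ unordered pairs of distinct sources, each source in at most one pair. For a source $i$ that belongs to some pair in $E_\lambda$, $$\bar a_i-a_i\in\Big[\frac{\varepsilon_{\min}b_{\min}}{m-1}-\frac{(d-1)\varepsilon_{\max}}{(m-1)(m-2)b_{\min}^2a_{\min}^2},\ \frac{\varepsilon_{\max}}{(m-1)b_{\min}a_{\min}}\Big].$$ For a source $i$ that belongs to no pair in $E_\lambda$, $$\bar a_i-a_i\in\Big[\frac{-d\varepsilon_{\max}}{(m-1)(m-2)b_{\min}^2a_{\min}^2},\ \frac{-d\varepsilon_{\min}b_{\min}^2}{(m-1)(m-2)}\Big].$$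
   Context: Accuracies. - $a_i=\mathbb E[\lambda_iY]$ and $a_{\min}=\min_ia_i$. - $\bar a_i=\mathbb E_{\{j,k\}}\Big[\sqrt{\mathbb E[\lambda_i\lambda_j]\mathbb E[\lambda_i\lambda_k]/\mathbb E[\lambda_j\lambda_k]}\Big]$, where the unordered pair $\{j,k\}\subset[m]\setminus\{i\}$ is uniformly random. - $b_{\min}$ is a number at most $\min_{i\ne j}\mathbb E[\lambda_i\lambda_j]$. The paper defines it as the minimum over all pairs of both the population pairwise moments $\mathbb E[\lambda_i\lambda_j]$ and their empirical counterparts. Misspecification. For $(i,j)\in E_\lambda$, $\varepsilon_{ij}=\mathbb E[\lambda_i\lambda_j]-\mathbb E[\lambda_iY]\mathbb E[\lambda_jY]$, with $0<\varepsilon_{\min}\le\varepsilon_{ij}\le\varepsilon_{\max}$ for all $(i,j)\in E_\lambda$. *)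

(* Defs.v *)
From HB Require Import structures.
From mathcomp Require Import all_boot all_order all_algebra.
From mathcomp Require Import reals.
From mathcomp Require Import sequences exp.
Set Implicit Arguments. Unset Strict Implicit. Unset Printing Implicit Defensive.
Import Order.TTheory GRing.Theory Num.Theory.
Local Open Scope ring_scope.

Section Ising.
Variables (R : realType) (m : nat).

Definition spin (b : bool) : R := if b then 1 else -1.

(* Configurations: Y encoded by y : bool, lambda by l : {ffun 'I_m -> bool}. *)
Definition config := (bool * {ffun 'I_m -> bool})%type.

(* Unnormalized Ising weight
   exp(thY*Y + sum_i th_i lambda_i Y + sum_{e={i,j} in E} thE_e lambda_i lambda_j),
   the edge set E being a set of (2-element) subsets of sources. *)
Definition ising_weight (thY : R) (th : 'I_m -> R) (E : {set {set 'I_m}})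
    (thE : {set 'I_m} -> R) (c : config) : R :=
  expR (thY * spin c.1
        + \sum_(i < m) th i * spin (c.2 i) * spin c.1
        + \sum_(e in E) thE e * \prod_(i in e) spin (c.2 i)).

Definition ising (thY : R) (th : 'I_m -> R) (E : {set {set 'I_m}})
    (thE : {set 'I_m} -> R) (c : config) : R :=
  ising_weight thY th E thE c / \sum_(c' : config) ising_weight thY th E thE c'.

Definition Ex (P : config -> R) (f : config -> R) : R :=
  \sum_(c : config) P c * f c.

Definition acc (P : config -> R) (i : 'I_m) : R :=
  Ex P (fun c => spin (c.2 i) * spin c.1).

Definition mom2 (P : config -> R) (i j : 'I_m) : R :=
  Ex P (fun c => spin (c.2 i) * spin (c.2 j)).

(* a_min = min_i a_i (the seed is a_0 when m > 0, so it is a genuine minimum). *)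
Definition amin (P : config -> R) : R :=
  \big[Num.min/head 0 [seq acc P i | i <- enum 'I_m]]_(i < m) acc P i.

Definition abar (P : config -> R) (i : 'I_m) : R :=
  (\sum_(j < m) \sum_(k < m | [&& (j < k)%N, j != i & k != i])
      Num.sqrt (mom2 P i j * mom2 P i k / mom2 P j k))
  / ('C(m.-1, 2))%:R.

Definition epsm (P : config -> R) (i j : 'I_m) : R :=
  mom2 P i j - acc P i * acc P j.

End Ising.

(* Main.v *)
Require Import Defs.
From HB Require Import structures.
From mathcomp Require Import all_boot all_order all_algebra.
From mathcomp Require Import reals sequences exp.
From mathcomp Require Import ring lra zify.
Import Order.TTheory GRing.Theory Num.Theory.
Local Open Scope ring_scope.
Set Implicit Arguments. Unset Strict Implicit. Unset Printing Implicit Defensive.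

Section Basic.
Variable R : realType.

Lemma spinE (b : bool) : spin R b = if b then 1 else -1. Proof. by []. Qed.
Lemma spin2 (b : bool) : spin R b * spin R b = 1.
Proof. by case: b; rewrite /spin ?mulr1 ?mulrNN ?mulr1. Qed.
Lemma spin_eq (a b : bool) : spin R (a == b) = spin R a * spin R b.
Proof. by case: a; case: b; rewrite /spin /= ?mulr1 ?mul1r ?mulrNN ?mulr1. Qed.
Lemma spin_neg (a : bool) : spin R (~~ a) = - spin R a.
Proof. by case: a; rewrite /spin /= ?opprK. Qed.
Lemma spin_le1 (a b : bool) : spin R a * spin R b <= 1.
Proof. by case: a; case: b; rewrite /spin ?mulr1 ?mul1r ?mulrNN ?mulr1 ?mulrN1 ?opprK //; lra. Qed.

Variables (m : nat) (thY : R) (th : 'I_m -> R) (E : {set {set 'I_m}}) (thE : {set 'I_m} -> R).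
Local Notation W := (ising_weight thY th E thE).
Local Notation P := (ising thY th E thE).

Definition ex (c : config m) : R :=
  thY * spin R c.1
        + \sum_(i < m) th i * spin R (c.2 i) * spin R c.1
        + \sum_(e in E) thE e * \prod_(i in e) spin R (c.2 i).
Lemma WE c : W c = expR (ex c). Proof. by []. Qed.
Lemma W_gt0 c : 0 < W c. Proof. exact: expR_gt0. Qed.
Definition Zs := \sum_(c : config m) W c.
Definition c0 : config m := (true, [ffun => true]).

Lemma sum_gt0 (F : config m -> R) : (forall c, 0 < F c) -> 0 < \sum_c F c.
Proof.
move=> H; rewrite (bigD1 c0) //=.
have : 0 <= \sum_(c | c != c0) F c by apply: sumr_ge0 => c _; exact: ltW.
have := H c0; lra.
Qed.
Lemma Z_gt0 : 0 < Zs. Proof. exact: sum_gt0 W_gt0. Qed.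

Lemma ExE f : Ex P f = (\sum_c W c * f c) / Zs.
Proof.
rewrite /Ex /ising mulr_suml; apply: eq_bigr => c _.
by rewrite /Zs mulrAC.
Qed.

Lemma Ex_le1 f : (forall c, f c <= 1) -> Ex P f <= 1.
Proof.
move=> H; rewrite ExE ler_pdivrMr ?Z_gt0 // mul1r /Zs.
apply: ler_sum => c _; rewrite -[leRHS]mulr1; apply: ler_wpM2l => //.
exact: ltW (W_gt0 c).
Qed.

Lemma acc_le1 i : acc P i <= 1. Proof. apply: Ex_le1 => c; exact: spin_le1. Qed.
Lemma mom2_le1 i j : mom2 P i j <= 1. Proof. apply: Ex_le1 => c; exact: spin_le1. Qed.
Lemma mom2C i j : mom2 P i j = mom2 P j i.
Proof. by rewrite /mom2 /Ex; apply: eq_bigr => c _; rewrite (mulrC (spin R (c.2 i))). Qed.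

End Basic.

Lemma bilin (R : realType) (T : finType) (W f g : T -> R) :
  \sum_(cc : T * T) W cc.1 * W cc.2 * ((f cc.1 - f cc.2) * (g cc.1 - g cc.2))
  = 2 * ((\sum_c W c) * (\sum_c W c * f c * g c) - (\sum_c W c * f c) * (\sum_c W c * g c)).
Proof.
rewrite -(pair_bigA _ (fun c c' => W c * W c' * ((f c - f c') * (g c - g c')))) /=.
set Z := \sum_c W c; set S := \sum_c W c * f c * g c.
set Bf := \sum_c W c * f c; set Bg := \sum_c W c * g c.
have inner : forall c, \sum_c' W c * W c' * ((f c - f c') * (g c - g c'))
   = W c * f c * g c * Z - W c * f c * Bg - W c * g c * Bf + W c * S.
  move=> c; rewrite /Z /Bg /Bf /S !mulr_sumr -!sumrB -big_split /=.
  apply: eq_bigr => c' _; ring.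
rewrite (eq_bigr _ (fun c _ => inner c)).
rewrite big_split /= !sumrB -!mulr_suml -/Z -/S -/Bf -/Bg; ring.
Qed.

Section Indep.
Variables (R : realType) (m : nat) (thY : R) (th : 'I_m -> R) (E : {set {set 'I_m}}) (thE : {set 'I_m} -> R).
Local Notation W := (ising_weight thY th E thE).
Local Notation P := (ising thY th E thE).
Hypothesis E2 : forall e, e \in E -> #|e| = 2%N.

Variable B : {set 'I_m}.
Hypothesis Bblock : forall e, e \in E -> forall k k', k \in e -> k' \in e -> (k \in B) = (k' \in B).

Definition u (k : 'I_m) (c : config m) : R := spin R (c.2 k) * spin R c.1.

Definition swp (cc : config m * config m) : config m * config m :=
  ((cc.2.1, [ffun k => if k \in B then (cc.1.2 k == (cc.1.1 == cc.2.1)) else cc.2.2 k]),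
   (cc.1.1, [ffun k => if k \in B then (cc.2.2 k == (cc.1.1 == cc.2.1)) else cc.1.2 k])).

Lemma swpK : involutive swp.
Proof.
case=> [[y l] [y' l']]; rewrite /swp /=; congr (_, _); congr (_, _);
  apply/ffunP => k; rewrite !ffunE; case: (k \in B) => //;
  by case: (l k); case: (l' k); case: y; case: y'.
Qed.

Lemma u_swp1 k cc : u k (swp cc).1 = if k \in B then u k cc.1 else u k cc.2.
Proof.
rewrite /u /swp /= ffunE; case: (k \in B) => //.
rewrite !spin_eq -!mulrA; congr (_ * _); by rewrite spin2 mulr1.
Qed.
Lemma u_swp2 k cc : u k (swp cc).2 = if k \in B then u k cc.2 else u k cc.1.
Proof.
rewrite /u /swp /= ffunE; case: (k \in B) => //.
rewrite !spin_eq -!mulrA; congr (_ * _); by rewrite mulrCA spin2 mulr1.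
Qed.

Lemma ex_swp cc : ex thY th E thE (swp cc).1 + ex thY th E thE (swp cc).2
  = ex thY th E thE cc.1 + ex thY th E thE cc.2.
Proof.
rewrite /ex.
have lin : forall c : config m, \sum_(i < m) th i * spin R (c.2 i) * spin R c.1 = \sum_(i < m) th i * u i c.
  by move=> c; apply: eq_bigr => i _; rewrite /u mulrA.
rewrite !lin.
have H1 : \sum_(i < m) th i * u i (swp cc).1 + \sum_(i < m) th i * u i (swp cc).2
   = \sum_(i < m) th i * u i cc.1 + \sum_(i < m) th i * u i cc.2.
  rewrite -!big_split /=; apply: eq_bigr => i _.
  rewrite u_swp1 u_swp2; case: (i \in B) => //; lra.
have H2 : \sum_(e in E) thE e * \prod_(i in e) spin R ((swp cc).1.2 i)
        + \sum_(e in E) thE e * \prod_(i in e) spin R ((swp cc).2.2 i)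
   = \sum_(e in E) thE e * \prod_(i in e) spin R (cc.1.2 i)
        + \sum_(e in E) thE e * \prod_(i in e) spin R (cc.2.2 i).
  rewrite -!big_split /=; apply: eq_big => // e eE.
  have s2 : (spin R cc.1.1 * spin R cc.2.1) ^+ #|e| = 1.
    by rewrite E2 // expr2 mulrACA !spin2 mulr1.
  case: (pickP (mem e)) => [k ke|e0]; last first.
    by rewrite !big_pred0 // => x; rewrite e0.
  case kB: (k \in B).
  - have allB : forall x, x \in e -> x \in B by move=> x xe; rewrite (Bblock eE xe ke).
    rewrite /swp /=.
    rewrite (eq_bigr (fun x => spin R (cc.1.2 x) * (spin R cc.1.1 * spin R cc.2.1))); last first.
      by move=> x xe; rewrite ffunE allB // spin_eq spin_eq.
    rewrite [X in _ + thE e * X](eq_bigr (fun x => spin R (cc.2.2 x) * (spin R cc.1.1 * spin R cc.2.1))); last first.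
      by move=> x xe; rewrite ffunE allB // spin_eq spin_eq.
    rewrite !big_split /= !prodr_const -exprMn s2 !mulr1; lra.
  - have allB : forall x, x \in e -> x \notin B by move=> x xe; rewrite (Bblock eE xe ke) kB.
    rewrite /swp /=.
    rewrite (eq_bigr (fun x => spin R (cc.2.2 x))); last first.
      by move=> x xe; rewrite ffunE (negbTE (allB x xe)).
    rewrite [X in _ + thE e * X](eq_bigr (fun x => spin R (cc.1.2 x))); last first.
      by move=> x xe; rewrite ffunE (negbTE (allB x xe)).
    lra.
have H3 : thY * spin R (swp cc).1.1 + thY * spin R (swp cc).2.1 = thY * spin R cc.1.1 + thY * spin R cc.2.1.
  rewrite /swp /=; lra.
lra.
Qed.

Lemma W_swp cc : W (swp cc).1 * W (swp cc).2 = W cc.1 * W cc.2.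
Proof. by rewrite !WE -!expRD ex_swp. Qed.

Variables i j : 'I_m.
Hypotheses (iB : i \in B) (jB : j \notin B).

Lemma G0 : \sum_(cc : config m * config m)
   W cc.1 * W cc.2 * ((u i cc.1 - u i cc.2) * (u j cc.1 - u j cc.2)) = 0.
Proof.
set G := \sum_cc _.
have : G = - G.
  rewrite {1}/G (reindex_inj (can_inj swpK)) /= -sumrN; apply: eq_bigr => cc _.
  rewrite W_swp !u_swp1 !u_swp2 iB (negbTE jB); lra.
lra.
Qed.

End Indep.

Section Indep2.
Variables (R : realType) (m : nat) (thY : R) (th : 'I_m -> R) (E : {set {set 'I_m}}) (thE : {set 'I_m} -> R).
Local Notation W := (ising_weight thY th E thE).
Local Notation P := (ising thY th E thE).
Hypothesis E2 : forall e, e \in E -> #|e| = 2%N.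
Hypothesis tE : trivIset E.

Lemma edge_eq e i k : e \in E -> i \in e -> k \in e -> i != k -> e = [set i; k].
Proof.
move=> eE ie ke ik; apply/eqP; rewrite eq_sym eqEcard cards2 ik E2 //= andbT.
by apply/subsetP => x; rewrite !inE => /orP[]/eqP->.
Qed.

Lemma edge_uniq e f k : e \in E -> f \in E -> k \in e -> k \in f -> e = f.
Proof.
move=> eE fE ke kf; apply/eqP; apply/negPn/negP => ef.
have := (trivIsetP tE) e f eE fE ef; move/disjointFr => /(_ k ke).
by rewrite kf.
Qed.

Definition blk (i : 'I_m) : {set 'I_m} := [set k | (k == i) || ([set i; k] \in E)].

Lemma blk_block i e : e \in E -> forall k k', k \in e -> k' \in e ->
  (k \in blk i) = (k' \in blk i).
Proof.
have key : forall e k, e \in E -> k \in e -> (k \in blk i) = (i \in e).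
  move=> e0 k eE ke; rewrite /blk inE.
  case: (eqVneq k i) ke => [->|ki] ke /=; first by rewrite ke.
  apply/idP/idP => [H|ie].
  - by rewrite -(@edge_uniq [set i; k] e0 k H eE (set22 i k) ke) set21.
  - by rewrite -(edge_eq eE ie ke) ?eE // eq_sym.
move=> eE k k' ke k'e; by rewrite (key e k) // (key e k').
Qed.

Lemma indep i j : i != j -> [set i; j] \notin E ->
  mom2 P i j = acc P i * acc P j.
Proof.
move=> ij ijE.
have iB : i \in blk i by rewrite inE eqxx.
have jB : j \notin blk i by rewrite inE negb_or eq_sym ij.
have G := G0 thY th thE E2 (@blk_block i) iB jB.
rewrite bilin in G.
have Z0 := Z_gt0 thY th E thE.
rewrite /mom2 /acc !ExE.
have -> : \sum_c W c * (spin R (c.2 i) * spin R (c.2 j)) = \sum_c W c * u R i c * u R j c.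
  apply: eq_bigr => -[y l] _; rewrite /u /=; case: y; rewrite /spin /=; ring.
have -> : \sum_c W c * (spin R (c.2 i) * spin R c.1) = \sum_c W c * u R i c by [].
have -> : \sum_c W c * (spin R (c.2 j) * spin R c.1) = \sum_c W c * u R j c by [].
rewrite /Zs in Z0 *.
move: G Z0; set A := \sum_c W c; set S := \sum_c _ * _ * _.
set Ai := \sum_c W c * u R i c; set Aj := \sum_c W c * u R j c => G Z0.
have H : A * S = Ai * Aj by lra.
have Zn : A != 0 by rewrite gt_eqF.
by rewrite mulf_div -H -mulf_div divff // mul1r.
Qed.
End Indep2.

Lemma key_ineq (R : realType) (P Q T : R) : 1 < P -> 1 < Q -> 1 < T -> 0 < P * Q * T - T - Q + P.
Proof.
move=> hP hQ hT.
have -> : P * Q * T - T - Q + P = (T - 1) * (P * Q - 1) + (P - 1) * (Q + 1) by ring.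
have h1 : 0 < P * Q - 1 by nra.
apply: ltr_wpDl; first by apply: mulr_ge0; lra.
apply: mulr_gt0; lra.
Qed.

Lemma pos_helper (R : realType) (c G e K : R) : 0 < c -> c * G = e * K -> 0 < e -> 0 < K -> 0 < G.
Proof. move=> hc h he hK; rewrite -(pmulr_rgt0 _ hc) h; exact: mulr_gt0. Qed.

Lemma quad (R : realType) (a b t X : R) (sb rb : bool) : 0 < a -> 0 < b -> 0 < t ->
 0 < spin R sb * (expR X - expR (X - 2*a*spin R sb - 2*t*(spin R sb*spin R rb)) + expR (X - 2*b*spin R rb - 2*t*(spin R sb*spin R rb))
          - expR (X - 2*b*spin R rb - 2*a*spin R sb)).
Proof.
move=> ha hb ht.
have hP : 1 < expR (2*a) by rewrite expR_gt1; lra.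
have hQ : 1 < expR (2*b) by rewrite expR_gt1; lra.
have hT : 1 < expR (2*t) by rewrite expR_gt1; lra.
have hX := expR_gt0 X.
case: sb; case: rb; rewrite /spin /= -!addrA !expRD
  ?mulr1 ?mul1r ?mulrN1 ?mulN1r ?mulrNN ?opprK ?expRN;
  move: hP hQ hT hX; set P := expR (2*a); set Q := expR (2*b); set T := expR (2*t); set eX := expR X;
  move=> hP hQ hT hX; have := key_ineq hP hQ hT; rewrite ?mulr1; fold T.
all: have P0 : P != 0 by rewrite gt_eqF //; lra.
all: have Q0 : Q != 0 by rewrite gt_eqF //; lra.
all: have T0 : T != 0 by rewrite gt_eqF //; lra.
- move=> k; apply: (@pos_helper R (P*Q*T) _ eX _ _ _ hX k); [apply: mulr_gt0; [apply: mulr_gt0|]; lra | field; rewrite ?P0 ?Q0 ?T0 //].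
- move=> k; apply: (@pos_helper R (P) _ eX _ _ _ hX k); [lra | field; rewrite ?P0 ?Q0 ?T0 //].
- move=> k; apply: (@pos_helper R (Q) _ eX _ _ _ hX k); [lra | field; rewrite ?P0 ?Q0 ?T0 //].
- move=> k; apply: (@pos_helper R (T) _ eX _ _ _ hX k); [lra | field; rewrite ?P0 ?Q0 ?T0 //].
Qed.

Lemma duo (R : realType) (a X : R) (sb : bool) : 0 < a ->
  0 < spin R sb * (expR X - expR (X - 2*a*spin R sb)).
Proof.
move=> ha; have hX := expR_gt0 X.
have hP : 1 < expR (2*a) by rewrite expR_gt1; lra.
case: sb; rewrite /spin ?mulr1 ?mulrN1 ?opprK ?mul1r ?mulN1r.
- rewrite expRB; have P0 : 0 < expR (2*a) by lra.
  rewrite subr_gt0 ltr_pdivrMr // ltr_pMr //.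
- rewrite expRD; nra.
Qed.

Section Pos.
Variables (R : realType) (m : nat) (thY : R) (th : 'I_m -> R) (E : {set {set 'I_m}}) (thE : {set 'I_m} -> R).
Local Notation W := (ising_weight thY th E thE).
Local Notation P := (ising thY th E thE).
Local Notation ex := (ex thY th E thE).
Hypothesis E2 : forall e, e \in E -> #|e| = 2%N.
Hypothesis tE : trivIset E.

Definition fl (k : 'I_m) (c : config m) : config m :=
  (c.1, [ffun x => if x == k then ~~ c.2 x else c.2 x]).

Lemma flK k : involutive (fl k).
Proof.
case=> y l; rewrite /fl /=; congr (_, _); apply/ffunP => x; rewrite !ffunE.
by case: eqP => // _; rewrite negbK.
Qed.

Lemma ex_fl k c : ex (fl k c) = ex c - 2 * th k * u R k c
   - 2 * \sum_(e in E | k \in e) thE e * \prod_(x in e) spin R (c.2 x).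
Proof.
rewrite /ex /fl /=.
have L : \sum_(i < m) th i * spin R ([ffun x => if x == k then ~~ c.2 x else c.2 x] i) * spin R c.1
   = \sum_(i < m) th i * spin R (c.2 i) * spin R c.1 - 2 * th k * u R k c.
  rewrite (bigD1 k) //= [in RHS](bigD1 k) //= ffunE eqxx spin_neg /u.
  rewrite (eq_bigr (fun i => th i * spin R (c.2 i) * spin R c.1)); last first.
    by move=> i /negbTE ik; rewrite ffunE ik.
  ring.
have Ed : \sum_(e in E) thE e * \prod_(i in e) spin R ([ffun x => if x == k then ~~ c.2 x else c.2 x] i)
   = \sum_(e in E) thE e * \prod_(i in e) spin R (c.2 i)
     - 2 * \sum_(e in E | k \in e) thE e * \prod_(x in e) spin R (c.2 x).
  rewrite (bigID (fun e : {set 'I_m} => k \in e) (fun e : {set 'I_m} => e \in E)) /= [in RHS](bigID (fun e : {set 'I_m} => k \in e) (fun e : {set 'I_m} => e \in E)) /=.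
  have -> : \sum_(i in E | k \in i) thE i * \prod_(i0 in i) spin R ([ffun x => if x == k then ~~ c.2 x else c.2 x] i0)
     = - \sum_(e in E | k \in e) thE e * \prod_(x in e) spin R (c.2 x).
    rewrite -sumrN; apply: eq_bigr => e /andP[_ ke].
    rewrite (bigD1 k) //= [in RHS](bigD1 k) //= ffunE eqxx spin_neg.
    rewrite (eq_bigr (fun i => spin R (c.2 i))); last first.
      by move=> i /andP[_ /negbTE ik]; rewrite ffunE ik.
    ring.
  have -> : \sum_(i in E | k \notin i) thE i * \prod_(i0 in i) spin R ([ffun x => if x == k then ~~ c.2 x else c.2 x] i0)
     = \sum_(e in E | k \notin e) thE e * \prod_(x in e) spin R (c.2 x).
    apply: eq_bigr => e /andP[_ ke]; congr (_ * _); apply: eq_bigr => x xe.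
    rewrite ffunE; case: eqP => // xk; by rewrite -xk xe in ke.
  ring.
rewrite L Ed; ring.
Qed.

Lemma ex_fl_free k c : k \notin cover E -> ex (fl k c) = ex c - 2 * th k * u R k c.
Proof.
move=> kc; rewrite ex_fl big_pred0 ?mulr0 ?subr0 // => e.
apply/negP => /andP[eE ke]; move/negP: kc; apply; apply/bigcupP; by exists e.
Qed.

Lemma ex_fl_pair k p c : [set k; p] \in E -> k != p ->
  ex (fl k c) = ex c - 2 * th k * u R k c - 2 * thE [set k; p] * (spin R (c.2 k) * spin R (c.2 p)).
Proof.
move=> kpE kp; rewrite ex_fl (big_pred1 [set k; p]); last first.
  move=> e; apply/andP/eqP => [[eE ke]|->]; last by rewrite kpE set21.
  exact: (edge_uniq tE eE kpE ke (set21 k p)).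
have kp' : k \notin [set p] by rewrite inE.
rewrite (big_setU1 _ kp') big_set1 /=; ring.
Qed.


Hypothesis thpos : forall i, 0 < th i.
Hypothesis thEpos : forall e, e \in E -> 0 < thE e.

Lemma u_spin (k : 'I_m) (c : config m) : u R k c = spin R (c.2 k == c.1).
Proof. by rewrite /u spin_eq. Qed.

Lemma u_fl_same (k : 'I_m) (c : config m) : u R k (fl k c) = - u R k c.
Proof. by rewrite /u /fl /= ffunE eqxx spin_neg mulNr. Qed.
Lemma u_fl_other (k p : 'I_m) (c : config m) : k != p -> u R k (fl p c) = u R k c.
Proof. by move=> kp; rewrite /u /fl /= ffunE (negbTE kp). Qed.

Lemma sumF_pos (k : 'I_m) : 0 < \sum_c W c * u R k c.
Proof.
case: (boolP (k \in cover E)) => [kc|kc].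
- case/bigcupP: kc => e0 e0E ke0.
  have /cards2P [x [y [xy e0xy]]] : #|e0| == 2%N by rewrite E2.
  have [p [kp e0kp]] : exists p, k != p /\ e0 = [set k; p].
    move: ke0; rewrite e0xy !inE => /orP[]/eqP->.
    + by exists y.
    + by exists x; rewrite eq_sym xy setUC.
  have kpE : [set k; p] \in E by rewrite -e0kp.
  have pkE : [set p; k] \in E by rewrite setUC.
  have pk : p != k by rewrite eq_sym.
  set F := fun c => W c * u R k c.
  have h1 : \sum_c F c = \sum_c F (fl k c) by rewrite (reindex_inj (can_inj (flK k))).
  have h2 : \sum_c F c = \sum_c F (fl p c) by rewrite (reindex_inj (can_inj (flK p))).
  have h3 : \sum_c F c = \sum_c F (fl k (fl p c)).
    by rewrite (reindex_inj (inj_comp (can_inj (flK k)) (can_inj (flK p)))).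
  have -> : \sum_c W c * u R k c = (\sum_c (F c + F (fl k c) + F (fl p c) + F (fl k (fl p c)))) / 4.
    rewrite !big_split /= -h1 -h2 -h3 /F; by field.
  apply: divr_gt0 => //; apply: sum_gt0 => c.
  rewrite /F !WE !u_fl_same !(u_fl_other _ kp).
  have qq : spin R (c.2 k) * spin R (c.2 p) = u R k c * u R p c.
    rewrite /u; case: (c.1); rewrite /spin; ring.
  have e1 : ex (fl k c) = ex c - 2 * th k * u R k c - 2 * thE [set k; p] * (u R k c * u R p c).
    by rewrite (@ex_fl_pair k p _ kpE kp) qq.
  have e2 : ex (fl p c) = ex c - 2 * th p * u R p c - 2 * thE [set k; p] * (u R k c * u R p c).
    by rewrite (@ex_fl_pair p k _ pkE pk) setUC [spin R (c.2 p) * _]mulrC qq.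
  have e3 : ex (fl k (fl p c)) = ex c - 2 * th p * u R p c - 2 * th k * u R k c.
    rewrite (@ex_fl_pair k p _ kpE kp) e2 (u_fl_other _ kp).
    have -> : spin R ((fl p c).2 k) * spin R ((fl p c).2 p) = - (u R k c * u R p c).
      by rewrite /fl /= !ffunE eqxx (negbTE kp) spin_neg mulrN qq.
    ring.
  rewrite e1 e2 e3 !u_spin.
  have := quad (ex c) (c.2 k == c.1) (c.2 p == c.1) (thpos k) (thpos p) (thEpos kpE).
  set s := spin R _; set r := spin R _ => H.
  apply: (lt_le_trans H); rewrite le_eqVlt; apply/orP; left; apply/eqP; ring.
- set F := fun c => W c * u R k c.
  have h1 : \sum_c F c = \sum_c F (fl k c) by rewrite (reindex_inj (can_inj (flK k))).
  have -> : \sum_c W c * u R k c = (\sum_c (F c + F (fl k c))) / 2.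
    rewrite !big_split /= -h1 /F; by field.
  apply: divr_gt0 => //; apply: sum_gt0 => c.
  rewrite /F !WE u_fl_same (@ex_fl_free k _ kc) !u_spin.
  have := duo (ex c) (c.2 k == c.1) (thpos k).
  move=> H; apply: (lt_le_trans H); rewrite le_eqVlt; apply/orP; left; apply/eqP; ring.
Qed.

Lemma acc_pos (k : 'I_m) : 0 < acc P k.
Proof.
rewrite /acc ExE; apply: divr_gt0; last exact: Z_gt0.
exact: sumF_pos.
Qed.

End Pos.

Section Count.
Variable m : nat.

Definition PS (F : {set {set 'I_m}}) : {set 'I_m * 'I_m} :=
  [set jk : 'I_m * 'I_m | (jk.1 < jk.2)%N && ([set jk.1; jk.2] \in F)].

Lemma pairs_card (F : {set {set 'I_m}}) : (forall A, A \in F -> #|A| = 2%N) ->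
  #|PS F| = #|F|.
Proof.
move=> F2.
have eqF : F = [set [set jk.1; jk.2] | jk in PS F].
  apply/setP => A; apply/idP/imsetP => [AF|[jk]]; last by rewrite inE => /andP[_ ?] ->.
  have /cards2P [x [y [xy Axy]]] : #|A| == 2%N by rewrite F2.
  have : (x < y)%N || (y < x)%N by rewrite -neq_ltn.
  case/orP => h.
  - by exists (x, y) => //; rewrite inE /= h -Axy.
  - exists (y, x); last by rewrite /= setUC. by rewrite inE /= h setUC -Axy.
rewrite [in RHS]eqF card_in_imset //.
move=> [a b] [c d]; rewrite !inE /= => /andP[ab _] /andP[cd _] eq.
have : a \in [set c; d] by rewrite -eq set21.
have : b \in [set c; d] by rewrite -eq set22.
rewrite !inE => /orP[]/eqP bcd /orP[]/eqP acd; subst => //.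
- by rewrite ltnn in ab.
- by have := ltn_trans ab cd; rewrite ltnn.
- by rewrite ltnn in ab.
Qed.
End Count.

Section RealLemmas.
Variable R : realType.

Lemma sqrt_fac (ai y : R) : 0 < ai -> 0 <= y -> Num.sqrt (ai * ai * y) = ai * Num.sqrt y.
Proof.
move=> ha hy; rewrite sqrtrM ?mulr_ge0 //; [|lra|lra].
by rewrite -expr2 sqrtr_sqr gtr0_norm.
Qed.

Lemma edge_bound (ai aj ak M e b A : R) :
  0 < ai -> ai <= 1 -> 0 < A -> A <= 1 -> A <= aj -> A <= ak -> aj <= 1 -> ak <= 1 ->
  M = aj * ak + e -> 0 < e -> b <= M -> M <= 1 -> 0 < b -> b <= ai -> b <= 1 ->
  - (e / (2 * b ^+ 2 * A ^+ 2)) <= Num.sqrt ((ai * aj) * (ai * ak) / M) - ai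
  /\ Num.sqrt ((ai * aj) * (ai * ak) / M) - ai <= - (e * b ^+ 2 / 2).
Proof.
move=> hai hai1 hA hA1 hAj hAk haj1 hak1 hM he hbM hM1 hb hbai hb1.
have hx : A ^+ 2 <= aj * ak by rewrite expr2; apply: ler_pM; lra.
have hx0 : 0 < aj * ak by apply: mulr_gt0; lra.
have M0 : 0 < M by lra.
have -> : (ai * aj) * (ai * ak) / M = ai * ai * (aj * ak / M) by field; lra.
rewrite sqrt_fac //; last by apply: divr_ge0; lra.
set s := Num.sqrt _.
have s0 : 0 <= s := sqrtr_ge0 _.
have s2 : s * s = aj * ak / M by rewrite -expr2 sqr_sqrtr //; apply: divr_ge0; lra.
have s2M : M * (s * s) = aj * ak by rewrite s2; field; lra.
have ss1 : s * s <= 1 by rewrite s2 ler_pdivrMr // mul1r; lra.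
have s1 : s <= 1 by nra.
have key : M * (1 + s) * (1 - s) = e by nra.
have ss : s * s <= s by nra.
have xM : aj * ak <= aj * ak / M by rewrite ler_pdivlMr //; nra.
have hA2 : A ^+ 2 <= 1 by rewrite expr2; nra.
have hb2 : b ^+ 2 <= b by rewrite expr2; nra.
have hbig : 2 * b ^+ 2 * A ^+ 2 <= M * (1 + s).
  have h1 : b * (1 + A ^+ 2) <= M * (1 + s) by nra.
  have h2 : 2 * b ^+ 2 * A ^+ 2 <= b * (1 + A ^+ 2).
    have : 2 * b * A ^+ 2 <= 1 + A ^+ 2 by nra.
    rewrite expr2; nra.
  lra.
have hden : 0 < 2 * b ^+ 2 * A ^+ 2 by apply: mulr_gt0; [apply: mulr_gt0|]; rewrite ?exprn_gt0 //.
split.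
- have : 1 - s <= e / (2 * b ^+ 2 * A ^+ 2).
    rewrite ler_pdivlMr //; nra.
  nra.
- have h1 : e / 2 <= 1 - s by nra.
  have h2 : b * (e / 2) <= ai * (1 - s) by nra.
  have : e * b ^+ 2 / 2 <= b * (e / 2) by nra.
  nra.
Qed.

Lemma pair_bound (ai ap ao e b A : R) :
  0 < ai -> ai <= 1 -> 0 < ap -> ap <= 1 -> 0 < ao -> ao <= 1 -> 0 < e ->
  ai * ap + e <= 1 -> b <= ai * ao -> 0 < b -> b <= 1 -> 0 < A -> A <= ap ->
  e * b / 2 <= Num.sqrt ((ai * ap + e) * (ai * ao) / (ap * ao)) - ai
  /\ Num.sqrt ((ai * ap + e) * (ai * ao) / (ap * ao)) - ai <= e / (2 * b * A).
Proof.
move=> hai hai1 hap hap1 hao hao1 he hM hbao hb hb1 hA hAp.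
have -> : (ai * ap + e) * (ai * ao) / (ap * ao) = ai * ai + ai * e / ap by field; lra.
set t := Num.sqrt _.
have t0 : 0 <= t := sqrtr_ge0 _.
have q0 : 0 <= ai * e / ap by apply: divr_ge0; nra.
have t2 : t * t = ai * ai + ai * e / ap by rewrite -expr2 sqr_sqrtr //; nra.
have t2' : ap * (t * t) = ap * ai * ai + ai * e by rewrite t2; field; lra.
have tai : ai <= t by nra.
have key : ap * (t - ai) * (t + ai) = ai * e by nra.
split.
- have hbai : b <= ai by nra.
  have h1 : b * ap * t <= ai.
    have hsq : (b * ap * t) * (b * ap * t) <= ai * ai.
      have -> : (b * ap * t) * (b * ap * t) = b * b * ap * (ap * (t * t)) by ring.
      rewrite t2'.
      have : b * ap * (ai * ap + e) <= 1.
        have : b * ap <= 1 by nra.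
        move=> h; apply: mulr_ile1 => //; nra.
      move=> K.
      have -> : b * b * ap * (ap * ai * ai + ai * e) = (b * ai) * (b * ap * (ai * ap + e)) by ring.
      have : (b * ai) * (b * ap * (ai * ap + e)) <= b * ai.
        rewrite -[leRHS]mulr1; apply: ler_wpM2l => //; nra.
      nra.
    have : 0 <= b * ap * t by apply: mulr_ge0; nra.
    nra.
  have h2 : b * ap * ai <= ai by nra.
  have h3 : b * ap * (t + ai) <= 2 * ai by lra.
  have hpos : 0 < t + ai by lra.
  (* (t - ai) = ai e /(ap (t+ai)) >= e b / 2 *)
  nra.
- have p2 : 0 <= ap * (t - ai) * (t - ai) by apply: mulr_ge0; [apply: mulr_ge0|]; lra.
  have h1 : 2 * ai * ap * (t - ai) <= ai * e.
    have -> : 2 * ai * ap * (t - ai) = ap * (t - ai) * (t + ai) - ap * (t - ai) * (t - ai) by ring.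
    lra.
  have h2 : 2 * ap * (t - ai) <= e.
    rewrite -(ler_pM2l hai); move: h1; rewrite !mulrA [ai * 2]mulrC; lra.
  have hbA : b * A <= ap by nra.
  have hden : 0 < 2 * b * A by apply: mulr_gt0; [apply: mulr_gt0|]; lra.
  rewrite ler_pdivlMr //.
  have : 0 <= (t - ai) * (ap - b * A) by apply: mulr_ge0; lra.
  nra.
Qed.
End RealLemmas.

Section Main.
Variables (R : realType) (m : nat) (thY : R) (th : 'I_m -> R) (E : {set {set 'I_m}})
  (thE : {set 'I_m} -> R) (bmin epsmin epsmax : R).
Hypotheses (m3 : (3 <= m)%N) (E2 : forall e, e \in E -> #|e| = 2%N) (tE : trivIset E)
  (hth : forall i, 0 < th i) (hthE : forall e, e \in E -> 0 < thE e).
Local Notation P := (ising thY th E thE).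
Hypotheses (hb : 0 < bmin) (hbM : forall i j, i != j -> bmin <= mom2 P i j) (he : 0 < epsmin)
  (hE : forall i j, i != j -> [set i; j] \in E -> epsmin <= epsm P i j /\ epsm P i j <= epsmax).

Local Notation a := (acc P).
Local Notation M := (mom2 P).
Local Notation A := (amin P).

Lemma apos k : 0 < a k. Proof. exact: (acc_pos thY E2 tE hth hthE k). Qed.
Lemma a1 k : a k <= 1. Proof. exact: acc_le1. Qed.
Lemma M1 j k : M j k <= 1. Proof. exact: mom2_le1. Qed.
Lemma MC j k : M j k = M k j. Proof. exact: mom2C. Qed.
Lemma ind j k : j != k -> [set j; k] \notin E -> M j k = a j * a k.
Proof. exact: (indep thY th thE E2 tE). Qed.
Lemma epsM j k : M j k = a j * a k + epsm P j k. Proof. rewrite /epsm; ring. Qed.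

Lemma Ale k : A <= a k. Proof. exact: bigmin_le. Qed.
Lemma Apos : 0 < A.
Proof.
apply: lt_bigmin => // [|k _]; last exact: apos.
case Hen: (enum 'I_m) => [|x s] /=.
  by have := size_enum_ord m; rewrite Hen /= => m0; have := m3; rewrite -m0.
exact: apos.
Qed.
Lemma A1 : A <= 1.
Proof.
have o : (0 < m)%N by apply: leq_trans m3.
exact: le_trans (Ale (Ordinal o)) (a1 _).
Qed.
Lemma b1 : bmin <= 1.
Proof.
have o0 : (0 < m)%N by apply: leq_trans m3.
have o1 : (1 < m)%N by apply: leq_trans m3.
have : Ordinal o0 != Ordinal o1 by [].
move/hbM => h; exact: le_trans h (M1 _ _).
Qed.

Definition T i (p : 'I_m * 'I_m) := Num.sqrt (M i p.1 * M i p.2 / M p.1 p.2).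

Lemma b_le_ai i j : i != j -> [set i; j] \notin E -> bmin <= a i.
Proof.
move=> ij ijE; have := hbM ij; rewrite ind //.
have := a1 j; have := apos i; have := apos j; nra.
Qed.

Lemma regular_non i j k : j != k -> i != j -> i != k -> [set i; j] \notin E -> [set i; k] \notin E ->
  [set j; k] \notin E -> T i (j, k) - a i = 0.
Proof.
move=> jk ij ik ijE ikE jkE; rewrite /T /= !ind //.
have aj := apos j; have ak := apos k; have ai := apos i.
have -> : a i * a j * (a i * a k) / (a j * a k) = a i * a i * 1 by field; apply/andP; split; rewrite gt_eqF.
by rewrite sqrt_fac ?sqrtr1 ?mulr1 ?subrr.
Qed.

Lemma regular_edge i j k : j != k -> i != j -> i != k -> [set i; j] \notin E -> [set i; k] \notin E ->
  [set j; k] \in E ->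
  - (epsmax / (2 * bmin ^+ 2 * A ^+ 2)) <= T i (j, k) - a i
  /\ T i (j, k) - a i <= - (epsmin * bmin ^+ 2 / 2).
Proof.
move=> jk ij ik ijE ikE jkE; rewrite /T /= (ind ij) // (ind ik) //.
have [e1 e2] := hE jk jkE.
have := @edge_bound R (a i) (a j) (a k) (M j k) (epsm P j k) bmin A (apos i) (a1 i) Apos A1 (Ale j) (Ale k)
  (a1 j) (a1 k) (epsM j k) (lt_le_trans he e1) (hbM jk) (M1 j k) hb (b_le_ai ij ijE) b1.
have D0 : 0 < 2 * bmin ^+ 2 * A ^+ 2.
  by apply: mulr_gt0; [apply: mulr_gt0|]; rewrite ?exprn_gt0 //; have := Apos; lra.
move=> [l u]; split.
- apply: le_trans l; rewrite lerN2; apply: ler_wpM2r => //.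
  by rewrite invr_ge0 ltW.
- apply: le_trans u _; rewrite lerN2.
  have : 0 <= bmin ^+ 2 by rewrite exprn_ge0 // ltW.
  nra.
Qed.

Lemma two_edges x y z : [set x; y] \in E -> [set x; z] \in E -> (z == x) || (z == y).
Proof.
move=> h1 h2; have := edge_uniq tE h2 h1 (set21 x z) (set21 x y).
move=> eq; have : z \in [set x; y] by rewrite -eq set22.
by rewrite !inE.
Qed.

Lemma partner_bound i q k : i != q -> [set i; q] \in E -> k != i -> k != q ->
  epsmin * bmin / 2 <= Num.sqrt (M i q * M i k / M q k) - a i
  /\ Num.sqrt (M i q * M i k / M q k) - a i <= epsmax / (2 * bmin * A).
Proof.
move=> iq iqE ki kq.
have ikE : [set i; k] \notin E.
  by apply/negP => h; have := two_edges iqE h; rewrite (negbTE ki) (negbTE kq).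
have qkE : [set q; k] \notin E.
  apply/negP => h; have := two_edges (x := q) (y := i) (z := k); rewrite setUC => /(_ iqE h).
  by rewrite (negbTE ki) (negbTE kq).
have ik : i != k by rewrite eq_sym.
have qk : q != k by rewrite eq_sym.
have [e1 e2] := hE iq iqE.
have hbik := hbM ik; rewrite (ind ik ikE) in hbik.
have hM := M1 i q; rewrite epsM in hM.
rewrite epsM (ind ik ikE) (ind qk qkE).
have := @pair_bound R (a i) (a q) (a k) (epsm P i q) bmin A (apos i) (a1 i) (apos q) (a1 q) (apos k) (a1 k)
  (lt_le_trans he e1) hM hbik hb b1 Apos (Ale q).
have D0 : 0 < 2 * bmin * A by apply: mulr_gt0; [apply: mulr_gt0|]; rewrite ?Apos //; lra.
move=> [l u]; split.
- apply: le_trans l; apply: ler_wpM2r; first by rewrite invr_ge0. apply: ler_wpM2r; [exact: ltW | exact: e1].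
- apply: le_trans u _; apply: ler_wpM2r => //; by rewrite invr_ge0 ltW.
Qed.

Lemma partner_bound' i q k : i != q -> [set i; q] \in E -> k != i -> k != q ->
  epsmin * bmin / 2 <= Num.sqrt (M i k * M i q / M k q) - a i
  /\ Num.sqrt (M i k * M i q / M k q) - a i <= epsmax / (2 * bmin * A).
Proof. by move=> *; rewrite [M i k * _]mulrC (MC k q); apply: partner_bound. Qed.

Definition Fi i : {set {set 'I_m}} := [set B : {set 'I_m} | (B \subset [set~ i]) && (#|B| == 2%N)].
Definition FE i : {set {set 'I_m}} := [set B in E | i \notin B].

Lemma Fi2 i B : B \in Fi i -> #|B| = 2%N.
Proof. by rewrite inE => /andP[_ /eqP]. Qed.

Lemma FE_sub i : FE i \subset Fi i.
Proof.
apply/subsetP => B; rewrite !inE => /andP[BE iB]; rewrite E2 // eqxx andbT.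
apply/subsetP => x xB; rewrite in_setC1; apply: contraNneq iB => <-; exact: xB.
Qed.

Lemma PS_Fi i p : (p \in PS (Fi i)) = [&& (p.1 < p.2)%N, p.1 != i & p.2 != i].
Proof.
case: p => x y /=; rewrite !inE /= subUset !sub1set !in_setC1 cards2.
case: (ltnP x y) => h //=.
have -> : (x != y) by apply: contraTneq h => ->; rewrite ltnn.
by rewrite andbT.
Qed.

Lemma card_Fi i : #|Fi i| = 'C(m.-1, 2).
Proof. by rewrite /Fi cards_draws cardsC1 card_ord. Qed.

Lemma abar_sum i : abar P i = (\sum_(p in PS (Fi i)) T i p) / ('C(m.-1, 2))%:R.
Proof.
rewrite /abar pair_big_dep; congr (_ / _); apply: eq_bigl => p; by rewrite PS_Fi.
Qed.

Lemma sum_ind (X : finType) (B C : {set X}) : C \subset B ->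
  \sum_(p in B) ((p \in C)%:R : R) = #|C|%:R.
Proof.
move=> CB; rewrite (big_setID C) /= (setIidPr CB).
rewrite [X in _ + X]big1 ?addr0; last by move=> p; rewrite inE => /andP[/negbTE -> _].
by rewrite (eq_bigr (fun _ => 1)) ?sumr_const // => p ->.
Qed.

Lemma binC2 n : ('C(n, 2) * 2 = n * n.-1)%N.
Proof.
elim: n => // n IH; rewrite binS bin1 mulnDl IH /=.
case: n {IH} => //= n; lia.
Qed.

Definition Cr : R := ('C(m.-1, 2))%:R.
Lemma Cr2 : Cr * 2 = (m%:R - 1) * (m%:R - 2).
Proof.
have h1 : (m.-1)%:R = m%:R - 1 :> R by rewrite -subn1 natrB // (leq_trans _ m3).
have h2 : (m.-1.-1)%:R = m%:R - 2 :> R by rewrite -!subn1 -subnDA natrB // (leq_trans _ m3).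
by rewrite /Cr -natrM binC2 natrM h1 h2.
Qed.
Lemma Cr_gt0 : 0 < Cr.
Proof.
have h := Cr2; have : (3 <= m)%N := m3; rewrite -(ler_nat R) => hm.
have : 0 < (m%:R - 1) * (m%:R - 2) :> R by apply: mulr_gt0; lra.
lra.
Qed.

Lemma abar_diff i : abar P i - a i = (\sum_(p in PS (Fi i)) (T i p - a i)) / Cr.
Proof.
have C0 : Cr != 0 by rewrite gt_eqF // Cr_gt0.
rewrite abar_sum sumrB sumr_const (pairs_card (@Fi2 i)) card_Fi -/Cr.
apply: (mulIf C0); rewrite mulrBl !divfK // -mulr_natr; ring.
Qed.

Lemma PS_mono (F G : {set {set 'I_m}}) : F \subset G -> PS F \subset PS G.
Proof.
move=> FG; apply/subsetP => p; rewrite !inE => /andP[h1 h2].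
by rewrite h1 (subsetP FG _ h2).
Qed.

Lemma sum_lin (S S' : {set 'I_m * 'I_m}) (c : R) : S' \subset S ->
  \sum_(p in S) c * (p \in S')%:R = c * #|S'|%:R.
Proof. by move=> h; rewrite -mulr_sumr sum_ind. Qed.

Lemma divC_le (x y : R) : x <= y -> x / Cr <= y / Cr.
Proof. move=> h; apply: ler_wpM2r => //; rewrite invr_ge0 ltW //; exact: Cr_gt0. Qed.

Lemma noncover i : i \notin cover E ->
  - (#|E|%:R) * epsmax / ((m%:R - 1) * (m%:R - 2) * bmin ^+ 2 * A ^+ 2) <= abar P i - a i
  /\ abar P i - a i <= - (#|E|%:R) * epsmin * bmin ^+ 2 / ((m%:R - 1) * (m%:R - 2)).
Proof.
move=> ic.
have niE : forall x, [set i; x] \notin E.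
  move=> x; apply/negP => h; move/negP: ic; apply; apply/bigcupP; exists [set i; x] => //.
  exact: set21.
have FEE : FE i = E.
  apply/setP => B; rewrite inE; case BE: (B \in E) => //=.
  apply/negP => iB; move/negP: ic; apply; apply/bigcupP; by exists B.
rewrite abar_diff.
set D := 2 * bmin ^+ 2 * A ^+ 2.
have hA := Apos.
have D0 : 0 < D by rewrite /D; apply: mulr_gt0; [apply: mulr_gt0|]; rewrite ?exprn_gt0.
have hp : forall p, p \in PS (Fi i) ->
    - (epsmax / D) * (p \in PS (FE i))%:R <= T i p - a i
    /\ T i p - a i <= - (epsmin * bmin ^+ 2 / 2) * (p \in PS (FE i))%:R.
  case=> j k; rewrite PS_Fi /= => /and3P[jk ji ki].
  have jk' : j != k by apply: contraTneq jk => ->; rewrite ltnn.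
  have ij : i != j by rewrite eq_sym.
  have ik : i != k by rewrite eq_sym.
  case: (boolP ([set j; k] \in E)) => h.
  - have -> : (j, k) \in PS (FE i) by rewrite inE /= jk FEE h.
    rewrite !mulr1; exact: regular_edge.
  - have -> : (j, k) \in PS (FE i) = false by rewrite inE /= FEE (negbTE h) andbF.
    rewrite !mulr0 regular_non //; lra.
have sub := PS_mono (FE_sub i).
have cE : #|PS (FE i)| = #|E|.
  by rewrite (pairs_card (F := FE i)) ?FEE // => B; rewrite FEE => /E2.
have lo : \sum_(p in PS (Fi i)) - (epsmax / D) * (p \in PS (FE i))%:R
          <= \sum_(p in PS (Fi i)) (T i p - a i).
  by apply: ler_sum => p h; exact: (proj1 (hp p h)).
have hi : \sum_(p in PS (Fi i)) (T i p - a i)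
          <= \sum_(p in PS (Fi i)) - (epsmin * bmin ^+ 2 / 2) * (p \in PS (FE i))%:R.
  by apply: ler_sum => p h; exact: (proj2 (hp p h)).
rewrite !sum_lin // cE in lo hi.
have C0 := Cr_gt0.
move: lo hi; set dd := (#|E|%:R : R) => lo hi.
rewrite -Cr2; split.
- apply: le_trans (divC_le lo); rewrite le_eqVlt; apply/orP; left; apply/eqP.
  rewrite /D; field; rewrite ?gt_eqF ?exprn_gt0 //.
- apply: le_trans (divC_le hi) _; rewrite le_eqVlt; apply/orP; left; apply/eqP.
  field; rewrite ?gt_eqF //.
Qed.

Lemma cover_case i : i \in cover E ->
  epsmin * bmin / (m%:R - 1) - (#|E|%:R - 1) * epsmax
     / ((m%:R - 1) * (m%:R - 2) * bmin ^+ 2 * A ^+ 2) <= abar P i - a i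
  /\ abar P i - a i <= epsmax / ((m%:R - 1) * bmin * A).
Proof.
case/bigcupP => e0 e0E ie0.
have /cards2P [x [y [xy e0xy]]] : #|e0| == 2%N by rewrite E2.
have [q [iq e0iq]] : exists q, i != q /\ e0 = [set i; q].
  move: ie0; rewrite e0xy !inE => /orP[]/eqP->.
  + by exists y.
  + by exists x; rewrite eq_sym xy setUC.
have iqE : [set i; q] \in E by rewrite -e0iq.
have qiE : [set q; i] \in E by rewrite setUC.
set Fip := Fi i :&: [set B : {set 'I_m} | q \in B].
have Fip_sub : Fip \subset Fi i by apply: subsetIl.
have FEmem : forall B, (B \in FE i) = (B \in E) && (B != [set i; q]).
  move=> B; rewrite inE; case BE: (B \in E) => //=.
  apply/idP/idP.
  - move=> iB; apply/eqP => Beq; move: iB; by rewrite Beq set21.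
  - move=> Bne; apply/negP => iB; move/eqP: Bne; apply; exact: (edge_uniq tE BE iqE iB (set21 i q)).
have cFE : #|E| = (1 + #|FE i|)%N.
  rewrite (cardsD1 [set i; q] E) iqE; congr (_ + _)%N; apply: eq_card => B.
  by rewrite FEmem !inE andbC.
have cFip : (#|Fip| + 'C(m.-2, 2) = 'C(m.-1, 2))%N.
  rewrite -(card_Fi i) -(cardsID [set B : {set 'I_m} | q \in B] (Fi i)); congr (_ + _)%N.
  have -> : Fi i :\: [set B : {set 'I_m} | q \in B] = [set B : {set 'I_m} | (B \subset [set~ i] :\ q) && (#|B| == 2%N)].
    apply/setP => B; rewrite !inE subsetD1.
    by case: (q \in B); case: (B \subset _); case: (#|B| == 2%N).
  rewrite cards_draws.
  have := cardsD1 q [set~ i]; rewrite cardsC1 card_ord !inE eq_sym iq /=.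
  by move=> h; rewrite -[m.-1]/(m.-1) h add1n /=.
have cFip' : #|Fip| = m.-2.
  have e2 : (m.-1 = (m.-2).+1)%N by rewrite prednK // -subn1 subn_gt0 (leq_trans _ m3) //.
  move: cFip; rewrite e2 binS bin1 addnC => /eqP; rewrite eqn_add2l => /eqP.
  by rewrite -e2.
rewrite abar_diff.
set D := 2 * bmin ^+ 2 * A ^+ 2.
have hA := Apos.
have D0 : 0 < D by rewrite /D; apply: mulr_gt0; [apply: mulr_gt0|]; rewrite ?exprn_gt0.
have D1 : 0 < 2 * bmin * A by apply: mulr_gt0; [apply: mulr_gt0|]; rewrite //.
have hp : forall p, p \in PS (Fi i) ->
    epsmin * bmin / 2 * (p \in PS Fip)%:R - (epsmax / D) * (p \in PS (FE i))%:R <= T i p - a i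
    /\ T i p - a i <= epsmax / (2 * bmin * A) * (p \in PS Fip)%:R.
  case=> j k; rewrite PS_Fi /= => /and3P[jk ji ki].
  have jk' : j != k by apply: contraTneq jk => ->; rewrite ltnn.
  have ij : i != j by rewrite eq_sym.
  have ik : i != k by rewrite eq_sym.
  have inFip : ((j, k) \in PS Fip) = (q == j) || (q == k).
    by rewrite !inE /= jk subUset !sub1set !in_setC1 ji ki cards2 jk'.
  case: (eqVneq q j) => [qj|qj].
  - subst j.
    have kq : k != q by rewrite eq_sym.
    have nFE : ((q, k) \in PS (FE i)) = false.
      rewrite !inE /= jk /=; apply/negP => /andP[h _].
      by have := two_edges qiE h; rewrite (negbTE kq) (negbTE ki).
    rewrite inFip eqxx nFE /= !mulr1 mulr0 subr0 /T /=.
    exact: partner_bound iq iqE ki kq.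
  case: (eqVneq q k) => [qk|qk].
  - subst k.
    have jq : j != q by rewrite eq_sym.
    have nFE : ((j, q) \in PS (FE i)) = false.
      rewrite !inE /= jk /=; apply/negP => /andP[h _].
      by rewrite setUC in h; have := two_edges qiE h; rewrite (negbTE jq) (negbTE ji).
    rewrite inFip eqxx orbT nFE /= !mulr1 mulr0 subr0 /T /=.
    exact: partner_bound' iq iqE ji jq.
  have ijE : [set i; j] \notin E.
    by apply/negP => h; have := two_edges iqE h; rewrite (negbTE ji) eq_sym (negbTE qj).
  have ikE : [set i; k] \notin E.
    by apply/negP => h; have := two_edges iqE h; rewrite (negbTE ki) eq_sym (negbTE qk).
  rewrite inFip (negbTE qj) (negbTE qk) /= !mulr0 sub0r.
  case: (boolP ([set j; k] \in E)) => h.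
  - have -> : (j, k) \in PS (FE i) by rewrite !inE /= jk h ?inE negb_or ij ik.
    rewrite mulr1; have [l u] := regular_edge jk' ij ik ijE ikE h; split => //.
    have : 0 <= epsmin * bmin ^+ 2 / 2 by apply: divr_ge0 => //; apply: mulr_ge0; [exact: ltW | exact: exprn_ge0 (ltW hb)].
    lra.
  - have -> : (j, k) \in PS (FE i) = false by rewrite !inE /= (negbTE h) andbF.
    rewrite !mulr0 regular_non //; lra.
have sub1 := PS_mono Fip_sub.
have sub2 := PS_mono (FE_sub i).
have lo : \sum_(p in PS (Fi i)) (epsmin * bmin / 2 * (p \in PS Fip)%:R - (epsmax / D) * (p \in PS (FE i))%:R)
          <= \sum_(p in PS (Fi i)) (T i p - a i).
  by apply: ler_sum => p h; exact: (proj1 (hp p h)).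
have hi : \sum_(p in PS (Fi i)) (T i p - a i)
          <= \sum_(p in PS (Fi i)) epsmax / (2 * bmin * A) * (p \in PS Fip)%:R.
  by apply: ler_sum => p h; exact: (proj2 (hp p h)).
rewrite sumrB !sum_lin // in lo hi.
rewrite (pairs_card (F := Fip)) in lo hi; last by move=> B /(subsetP Fip_sub)/Fi2.
rewrite (pairs_card (F := FE i)) in lo; last by move=> B /(subsetP (FE_sub i))/Fi2.
rewrite cFip' in lo hi.
have h1 : (m.-2)%:R = m%:R - 2 :> R by rewrite -!subn1 -subnDA natrB // (leq_trans _ m3).
have h2 : #|FE i|%:R = #|E|%:R - 1 :> R by rewrite cFE natrD; ring.
rewrite h1 h2 in lo hi.
have C0 := Cr_gt0.
have hm : (3 <= m)%N := m3; rewrite -(ler_nat R) in hm.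
have Ceq : Cr = (m%:R - 1) * (m%:R - 2) / 2 by rewrite -Cr2; field.
move: lo hi; set dd := (#|E|%:R : R) => lo hi.
split.
- apply: le_trans (divC_le lo); rewrite le_eqVlt; apply/orP; left; apply/eqP.
  rewrite Ceq /D; field; rewrite ?gt_eqF ?exprn_gt0 //; lra.
- apply: le_trans (divC_le hi) _; rewrite le_eqVlt; apply/orP; left; apply/eqP.
  rewrite Ceq; field; rewrite ?gt_eqF //; lra.
Qed.
End Main.


Unset Implicit Arguments.
Theorem lemma1 (R : realType) (m : nat) (thY : R) (th : 'I_m -> R)
    (E : {set {set 'I_m}}) (thE : {set 'I_m} -> R)
    (bmin epsmin epsmax : R) :
  (3 <= m)%N ->
  (* E: unordered pairs of distinct sources, each source in at most one pair *)
  (forall e, e \in E -> #|e| = 2%N) ->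
  trivIset E ->
  (* all canonical parameters positive *)
  0 < thY -> (forall i, 0 < th i) -> (forall e, e \in E -> 0 < thE e) ->
  let P := ising thY th E thE in
  let d : R := #|E|%:R in
  (* b_min: positive lower bound on all pairwise moments *)
  0 < bmin -> (forall i j, i != j -> bmin <= mom2 P i j) ->
  (* misspecification bounds *)
  0 < epsmin ->
  (forall i j, i != j -> [set i; j] \in E ->
     epsmin <= epsm P i j /\ epsm P i j <= epsmax) ->
  forall i : 'I_m,
    (i \in cover E ->
       epsmin * bmin / (m%:R - 1)
         - (d - 1) * epsmax
           / ((m%:R - 1) * (m%:R - 2) * bmin ^+ 2 * amin P ^+ 2)
         <= abar P i - acc P i
       /\ abar P i - acc P i <= epsmax / ((m%:R - 1) * bmin * amin P)) /\
    (i \notin cover E ->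
       - d * epsmax / ((m%:R - 1) * (m%:R - 2) * bmin ^+ 2 * amin P ^+ 2)
         <= abar P i - acc P i
       /\ abar P i - acc P i
          <= - d * epsmin * bmin ^+ 2 / ((m%:R - 1) * (m%:R - 2))).
Proof.
move=> m3 E2 tE hY hth hthE P d hb hbM he hE i; split.
- move=> ic; exact: (cover_case m3 E2 tE hth hthE hb hbM he hE ic).
- move=> ic; exact: (noncover m3 E2 tE hth hthE hb hbM he hE ic).
Qed.
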